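(* Let $A=\{(0,0,0),(0,1,0),(1,0,0),(1,1,0)\}\subset\mathbb{R}^3$ and let $\lambda\subset\mathbb{R}^3$ be the line $x=y=\tfrac12$. Then the set $\Lambda$ of points $P\in\lambda\cap\mathbb{Q}^3$ such that the Euclidean distance $|PQ|$ is rational for every $Q\in A$ is dense in $\lambda$ (with the Euclidean topology).
   Context: No further context is needed. *)

(* Defs.v *)
From Stdlib Require Import Reals QArith Qreals List.
Open Scope R_scope.

Definition pt : Type := (R * R * R)%type.
Definition px (P : pt) : R := fst (fst P).
Definition py (P : pt) : R := snd (fst P).
Definition pz (P : pt) : R := snd P.

Definition dist3 (P Q : pt) : R :=
  sqrt ((px P - px Q) ^ 2 + (py P - py Q) ^ 2 + (pz P - pz Q) ^ 2).

Definition is_rat (x : R) : Prop := exists q : Q, Q2R q = x.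

Definition rat_point (P : pt) : Prop :=
  is_rat (px P) /\ is_rat (py P) /\ is_rat (pz P).

Definition A_set : list pt :=
  ((0, 0, 0) :: (0, 1, 0) :: (1, 0, 0) :: (1, 1, 0) :: nil)%R.

Definition on_lambda (P : pt) : Prop := px P = 1/2 /\ py P = 1/2.

Definition in_Lambda (P : pt) : Prop :=
  on_lambda P /\ rat_point P /\ (forall Q, In Q A_set -> is_rat (dist3 P Q)).

(* Main.v *)
Require Import Defs.
From Stdlib Require Import Reals QArith Qreals List Lra Lia.
Open Scope R_scope.

Lemma rat_nonzero (q : Q) : Q2R q <> 0 -> ~ (q == 0)%Q.
Proof. intros H E. apply H. rewrite (Qeq_eqR _ _ E). unfold Q2R; simpl; ring. Qed.

Lemma key_approx (t0 d : R) : 0 < d ->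
  exists q : Q, t0 < Q2R q /\ Q2R q - t0 <= d.
Proof.
  intros Hd.
  destruct (archimed (/ d)) as [H1 H2].
  assert (Hid : 0 < / d) by (apply Rinv_0_lt_compat; lra).
  set (m := up (/ d)) in *.
  assert (Hm : (0 < m)%Z) by (apply lt_IZR; lra).
  set (p := Z.to_pos m).
  assert (Hp : IZR (Zpos p) = IZR m) by (unfold p; rewrite Z2Pos.id; auto).
  assert (HN : 0 < IZR (Zpos p)) by (rewrite Hp; lra).
  destruct (archimed (t0 * IZR (Zpos p))) as [H3 H4].
  exists (Qmake (up (t0 * IZR (Zpos p))) p).
  unfold Q2R; simpl.
  split.
  - apply (Rmult_lt_reg_r (IZR (Zpos p))); auto.
    rewrite Rmult_assoc, Rinv_l by lra. lra.
  - apply (Rmult_le_reg_r (IZR (Zpos p))); auto.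
    replace ((IZR (up (t0 * IZR (Zpos p))) * / IZR (Zpos p) - t0) * IZR (Zpos p))
      with (IZR (up (t0 * IZR (Zpos p))) - t0 * IZR (Zpos p)) by (field; lra).
    assert (1 <= d * IZR (Zpos p)).
    { rewrite Hp. apply (Rmult_le_reg_l (/ d)); auto.
      rewrite <- Rmult_assoc, Rinv_l by lra. lra. }
    lra.
Qed.

Theorem proposition3p1 :
  forall P0 : pt, on_lambda P0 ->
  forall eps : R, 0 < eps ->
  exists P : pt, in_Lambda P /\ dist3 P P0 < eps.
Proof.
  intros P0 [HX HY] eps Heps.
  set (z0 := pz P0).
  set (s := sqrt (z0 ^ 2 + 1/2)).
  assert (Hs2 : s * s = z0 ^ 2 + 1/2) by (unfold s; apply sqrt_sqrt; nra).
  assert (Hs0 : 0 <= s) by (unfold s; apply sqrt_pos).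
  set (t0 := z0 + s).
  assert (Ht0 : 0 < t0) by (unfold t0; nra).
  set (C := 1 + / (t0 * t0)).
  assert (HC : 0 < C) by (unfold C; assert (0 < / (t0*t0)) by (apply Rinv_0_lt_compat; nra); lra).
  destruct (key_approx t0 (eps / C)) as [q [Hq1 Hq2]].
  { apply Rdiv_lt_0_compat; auto. }
  set (t := Q2R q) in *.
  assert (Ht : 0 < t) by lra.
  assert (Hqnz : ~ (q == 0)%Q) by (apply rat_nonzero; fold t; lra).
  set (zq := ((q - / (2 * q)) / 2)%Q).
  set (wq := ((q + / (2 * q)) / 2)%Q).
  assert (Hz : Q2R zq = (t - / (2 * t)) / 2).
  { unfold zq. assert (~ (2 * q == 0)%Q).
    { apply rat_nonzero. rewrite Q2R_mult. unfold Q2R at 1; simpl. fold t; lra. }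
    rewrite Q2R_div by (intro E; discriminate E).
    rewrite Q2R_minus, Q2R_inv, Q2R_mult by auto.
    unfold Q2R at 2 4; simpl. fold t. field. lra. }
  assert (Hw : Q2R wq = (t + / (2 * t)) / 2).
  { unfold wq. assert (~ (2 * q == 0)%Q).
    { apply rat_nonzero. rewrite Q2R_mult. unfold Q2R at 1; simpl. fold t; lra. }
    rewrite Q2R_div by (intro E; discriminate E).
    rewrite Q2R_plus, Q2R_inv, Q2R_mult by auto.
    unfold Q2R at 2 4; simpl. fold t. field. lra. }
  set (z := Q2R zq) in *.
  set (w := Q2R wq) in *.
  assert (Hw0 : 0 < w).
  { rewrite Hw. assert (0 < / (2 * t)) by (apply Rinv_0_lt_compat; lra). lra. }
  assert (Hzw : 1/2 + z ^ 2 = w ^ 2).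
  { rewrite Hz, Hw. field. lra. }
  assert (Hdist : forall a b, a ^ 2 = 1/4 -> b ^ 2 = 1/4 ->
     sqrt (a ^ 2 + b ^ 2 + z ^ 2) = w).
  { intros a b Ha Hb. replace (a ^ 2 + b ^ 2 + z ^ 2) with (w ^ 2) by lra.
    apply sqrt_pow2; lra. }
  exists (1/2, 1/2, z). split.
  - split; [split; reflexivity|]. split.
    + split; [|split]; unfold px, py, pz; simpl.
      * exists (1 # 2)%Q. unfold Q2R; simpl. lra.
      * exists (1 # 2)%Q. unfold Q2R; simpl. lra.
      * exists zq. reflexivity.
    + intros Q HQ. simpl in HQ.
      destruct HQ as [<-|[<-|[<-|[<-|[]]]]]; exists wq; unfold dist3, px, py, pz; cbn [fst snd];
        fold w; symmetry; rewrite Rminus_0_r with (r := z); apply Hdist; field.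
  - unfold dist3, px, py, pz; cbn [fst snd]. unfold px, py in HX, HY. rewrite HX, HY. fold z0.
    assert (Ezz : z - z0 = (t - t0) * (1 + / (2 * t * t0)) / 2).
    { rewrite Hz.
      assert (Hz0 : z0 = (t0 - / (2 * t0)) / 2).
      { apply (Rmult_eq_reg_r (2 * t0)); [|lra].
        replace ((t0 - / (2 * t0)) / 2 * (2 * t0)) with (t0 * t0 - 1/2) by (field; lra).
        unfold t0. nra. }
      rewrite Hz0. field. lra. }
    assert (Hinv : / (2 * t * t0) <= / (t0 * t0)).
    { apply Rinv_le_contravar; nra. }
    assert (Hinv0 : 0 < / (2 * t * t0)) by (apply Rinv_0_lt_compat; nra).
    assert (Hpos : 0 <= z - z0) by (rewrite Ezz; nra).
    change (snd P0) with z0.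
    replace ((1/2 - 1/2) ^ 2 + (1/2 - 1/2) ^ 2 + (z - z0) ^ 2) with ((z - z0) ^ 2) by ring.
    rewrite sqrt_pow2 by auto.
    rewrite Ezz.
    assert (Hb : (t - t0) * C <= eps).
    { replace eps with (eps / C * C) by (field; lra). apply Rmult_le_compat_r; lra. }
    assert ((t - t0) * (1 + / (2 * t * t0)) <= (t - t0) * C).
    { apply Rmult_le_compat_l; unfold C; lra. }
    lra.
Qed.
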